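(* Let $m\ge 3$ and let $T_m$ be the graph defined below. The multiplicity of $1$ as an eigenvalue of $T_m$ equals the number of pairs $(j,\ell)\in\{0,\dots,m-1\}^2$ satisfying \[ \cos\tfrac{2\pi j}{m}+\cos\tfrac{2\pi \ell}{m}=2\cos\tfrac{2\pi j}{m}\cos\tfrac{2\pi \ell}{m}. \]
   Context: For $m\ge3$, $T_m$ is the cubic graph on $2m^2$ vertices $\{x^+_{i,j},\,x^-_{i,j}\mid i,j\in\mathbb{Z}_m\}$ with edges $\{x^+_{i,j},x^+_{i,j+1}\}$, $\{x^-_{i,j},x^-_{i,j+1}\}$ and $\{x^+_{i,j},x^-_{j,i}\}$ for all $i,j\in\mathbb{Z}_m$. Eigenvalues are those of the adjacency matrix. *)

(* Defs.v *)
From HB Require Import structures.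
From mathcomp Require Import all_boot all_order all_algebra.
From mathcomp Require Import all_classical all_reals all_analysis.
Set Implicit Arguments. Unset Strict Implicit. Unset Printing Implicit Defensive.
Import Order.TTheory GRing.Theory Num.Theory.
Local Open Scope ring_scope.

(* Vertices of T_m: (true, i, j) = x^+_{i,j}, (false, i, j) = x^-_{i,j},
   with i, j in Z_m represented by 'I_m. *)
Definition Tvert (m : nat) : finType := (bool * 'I_m * 'I_m)%type.

Definition Tadj (m : nat) (u v : Tvert m) : bool :=
  let: (s, i, j) := u in
  let: (t, k, l) := v in
  if s == t then
    (i == k) && (((j.+1 %% m)%N == l :> nat) || ((l.+1 %% m)%N == j :> nat))
  else
    (k == j) && (l == i).

Definition Tadjmx (R : realType) (m : nat) : 'M[R]_#|Tvert m| :=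
  \matrix_(a, b) ((Tadj (enum_val a) (enum_val b) : nat)%:R).

Definition eig_mult (R : realType) (n : nat) (A : 'M[R]_n) (x : R) : nat :=
  mup x (char_poly A).

(* Main.v *)
Require Import Defs.
From HB Require Import structures.
From mathcomp Require Import all_boot all_order all_algebra.
From mathcomp Require Import all_classical all_reals all_analysis.
From mathcomp Require Import complex.
From mathcomp Require Import ring lra zify.
Import Order.TTheory GRing.Theory Num.Theory.
Local Open Scope ring_scope.
Set Implicit Arguments. Unset Strict Implicit. Unset Printing Implicit Defensive.

Section Trig.
Variable R : realType.

Definition ex (x : R) : R[i] := Complex (cos x) (sin x).

Lemma exD x y : ex (x + y) = ex x * ex y.
Proof. by rewrite /ex cosD sinD; apply/eqP; rewrite eq_complex /= !eqxx /= addrC. Qed.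

Lemma ex0 : ex 0 = 1.
Proof. by rewrite /ex cos0 sin0. Qed.

Lemma exMn x k : ex x ^+ k = ex (x *+ k).
Proof. elim: k => [|k IH]; first by rewrite expr0 mulr0n ex0.
by rewrite exprS IH mulrS exD. Qed.

Lemma exNK x : ex (- x) * ex x = 1.
Proof. by rewrite -exD addNr ex0. Qed.

Lemma ex2pi : ex ((pi : R) *+ 2) = 1.
Proof. by rewrite /ex (cos2pi R) (sin2pi R). Qed.

Lemma cos_lt1 (y : R) : 0 < y < pi -> cos (y *+ 2) < 1.
Proof.
move=> hy; rewrite cos_mulr2n cos2sin2.
have := sin_gt0_pi hy => s0.
have : 0 < sin y ^+ 2 by rewrite exprn_gt0.
lra.
Qed.
End Trig.

Section Root.
Variables (R : realType) (m : nat).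
Hypothesis hm : (0 < m)%N.

Definition th (j : nat) : R := 2 * pi * j%:R / m%:R.
Definition w : R[i] := ex (th 1).

Lemma mR0 : (m%:R : R) != 0.
Proof. by rewrite pnatr_eq0 -lt0n. Qed.

Lemma wX j : w ^+ j = ex (th j).
Proof. by rewrite /w exMn /th; congr ex; rewrite -mulr_natr; ring. Qed.

Lemma wm : w ^+ m = 1.
Proof.
rewrite wX /th -mulrA divff ?mR0 // mulr1.
by rewrite -(ex2pi R) mulr_natl.
Qed.

Lemma wX_neq1 k : (0 < k < m)%N -> w ^+ k != 1.
Proof.
move=> /andP[k0 km]; rewrite wX /ex; apply/negP => /eqP [] hc _.
have : cos (th k) < 1.
  have -> : th k = (pi * k%:R / m%:R) *+ 2 by rewrite /th -mulr_natr; ring.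
  apply: cos_lt1; apply/andP; split.
    by rewrite divr_gt0 ?mulr_gt0 ?pi_gt0 ?ltr0n.
  rewrite ltr_pdivrMr ?ltr0n // ltr_pM2l ?pi_gt0 // ltr_nat //.
by rewrite hc ltxx.
Qed.

Lemma w_prim : m.-primitive_root w.
Proof.
have [m' pm' dv] := prim_order_exists hm wm.
have m'0 := prim_order_gt0 pm'.
have le := dvdn_leq hm dv.
have E : m' = m.
  apply/eqP; rewrite eqn_leq le /= leqNgt; apply/negP => lt.
  by have := wX_neq1 (k:=m'); rewrite m'0 lt (prim_expr_order pm') eqxx => /(_ isT).
by rewrite -E.
Qed.
End Root.

Section WFacts.
Variables (R : realType) (m : nat).
Hypothesis hm : (0 < m)%N.
Local Notation w := (w R m).
Local Notation th := (th R m).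

Lemma w_neq0 : w != 0.
Proof. by rewrite (prim_root_eq0 (w_prim R hm)) -lt0n hm. Qed.

Lemma wmod j x : w ^+ (j * (x %% m)) = w ^+ (j * x).
Proof. by rewrite !exprM expr_mod // exprAC (wm R hm) expr1n. Qed.

Lemma wS j (k : 'I_m) : w ^+ (j * ordS k) = w ^+ (j * k) * w ^+ j.
Proof. by rewrite /= wmod mulnS exprD mulrC. Qed.

Lemma wP j (k : 'I_m) : w ^+ (j * ord_pred k) = w ^+ (j * k) * w ^+ (j * m.-1).
Proof.
rewrite /= wmod -exprD -mulnDr; congr (w ^+ (j * _)).
suff h : forall a, (a + m).-1 = (a + m.-1)%N by apply: h.
by move=> a; rewrite -{1}(prednK hm) addnS.
Qed.

Lemma wsum j : w ^+ j + w ^+ (j * m.-1) = real_complex R (2 * cos (th j)).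
Proof.
have h1 : w ^+ (j * m.-1) * w ^+ j = 1.
  by rewrite -exprD -{2}(muln1 j) -mulnDr addn1 prednK // exprM exprAC (wm R hm) expr1n.
have h2 : ex (- th j) * w ^+ j = 1 by rewrite (wX R) exNK.
have : w ^+ (j * m.-1) = ex (- th j).
  by apply: (mulIf (expf_neq0 j w_neq0)); rewrite h1 h2.
move=> ->; rewrite (wX R) /ex cosN sinN; apply/eqP; rewrite eq_complex /=.
by rewrite subrr mulr2n mulrDl mul1r !eqxx.
Qed.

Lemma wX_inj (j j' : 'I_m) : (w ^+ j == w ^+ j') = (j == j').
Proof. by rewrite (eq_prim_root_expr (w_prim R hm)) !modn_small. Qed.

Lemma geo_sum (j j' : 'I_m) :
  \sum_(i < m) (w ^+ j * w^-1 ^+ j') ^+ i = ((j == j') * m)%:R.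
Proof.
have wu : w \is a GRing.unit by rewrite unitfE w_neq0.
case: eqP => [<-|ne].
  rewrite exprVn divrr ?unitrX // mul1n.
  by rewrite (eq_bigr (fun _ => 1)) ?sumr_const ?card_ord // => i _; rewrite expr1n.
have z1 : w ^+ j * w^-1 ^+ j' != 1.
  rewrite exprVn; apply/negP => /eqP h; apply: ne; apply/eqP; rewrite -wX_inj; apply/eqP.
  by move: h => /(congr1 (fun z => z * w ^+ j')); rewrite mulrVK ?unitrX // mul1r.
have zm : (w ^+ j * w^-1 ^+ j') ^+ m = 1.
  by rewrite exprMn -!exprM mulnC exprM (wm R hm) expr1n mulnC exprM exprVn (wm R hm) invr1 expr1n mulr1.
have := subrX1 (w ^+ j * w^-1 ^+ j') m; rewrite zm subrr => /esym/eqP.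
by rewrite mulf_eq0 subr_eq0 (negPf z1) /= mul0n => /eqP.
Qed.
End WFacts.

Section MkM.
Variables (T : finType) (K : comNzRingType).

Definition mkM (f : T -> T -> K) : 'M[K]_#|T| :=
  \matrix_(a, b) f (enum_val a) (enum_val b).

Lemma sum_enum (F : T -> K) : \sum_(c < #|T|) F (enum_val c) = \sum_x F x.
Proof.
rewrite (reindex (@enum_rank T)) /=; last first.
  by exists enum_val => x _; rewrite ?enum_valK ?enum_rankK.
by apply: eq_bigr => x _; rewrite enum_rankK.
Qed.

Lemma mkM_mul f g :
  mkM f *m mkM g = mkM (fun x y => \sum_z f x z * g z y).
Proof.
apply/matrixP => a b; rewrite !mxE.
by rewrite -(sum_enum (fun z => f (enum_val a) z * g z (enum_val b))); apply: eq_bigr => c _; rewrite !mxE.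
Qed.

Lemma mkM1 : mkM (fun x y => (x == y)%:R) = 1%:M.
Proof.
apply/matrixP => a b; rewrite !mxE.
by rewrite (inj_eq enum_val_inj).
Qed.

Lemma mkM_ext f g : (forall x y, f x y = g x y) -> mkM f = mkM g.
Proof. by move=> h; apply/matrixP => a b; rewrite !mxE h. Qed.

Lemma sum_delta (F : T -> K) y : \sum_x (x == y)%:R * F x = F y.
Proof.
rewrite (bigD1 y) //= eqxx mul1r big1 ?addr0 // => x /negPf ->; by rewrite mul0r.
Qed.

Lemma sum_delta' (F : T -> K) y : \sum_x F x * (x == y)%:R = F y.
Proof.
rewrite (bigD1 y) //= eqxx mulr1 big1 ?addr0 // => x /negPf ->; by rewrite mulr0.
Qed.

Lemma char_poly_mkM_diag (d : T -> K) :
  char_poly (mkM (fun x y => (x == y)%:R * d x)) = \prod_x ('X - (d x)%:P).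
Proof.
rewrite char_poly_trig.
  rewrite (reindex (@enum_rank T)) /=; last first.
    by exists enum_val => x _; rewrite ?enum_valK ?enum_rankK.
  by apply: eq_bigr => x _; rewrite !mxE enum_rankK eqxx mul1r.
apply/is_trig_mxP => a b ab; rewrite mxE (inj_eq enum_val_inj).
have : a != b by rewrite -val_eqE /= neq_ltn ab.
by move/negPf => ->; rewrite mul0r.
Qed.
End MkM.

Section CharSim.
Variable K : fieldType.
Lemma char_poly_sim n (A P Q D : 'M[K]_n) :
  P *m Q = 1%:M -> P *m A = D *m P -> char_poly A = char_poly D.
Proof.
move=> PQ PA.
have QP := mulmx1C PQ.
have AE : A = Q *m D *m P by rewrite -mulmxA -PA mulmxA QP mul1mx.
rewrite /char_poly AE /char_poly_mx.
have -> : 'X%:M - map_mx polyC (Q *m D *m P) =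
  map_mx polyC Q *m ('X%:M - map_mx polyC D) *m map_mx polyC P.
  rewrite mulmxBr mulmxBl !map_mxM -!mulmxA; congr (_ - _).
  by rewrite mul_scalar_mx -scalemxAr -map_mxM QP map_mx1 scalemx1.
rewrite !det_mulmx mulrC mulrA -det_mulmx -map_mxM PQ map_mx1 det1 mul1r //.
Qed.
End CharSim.

Section Graph.
Variables (m : nat).
Hypothesis hm : (3 <= m)%N.
Local Notation T := (Tvert m).

Definition nb1 (y : T) : T := let: (t, i, k) := y in (t, i, ordS k).
Definition nb2 (y : T) : T := let: (t, i, k) := y in (t, i, ord_pred k).
Definition nb3 (y : T) : T := let: (t, i, k) := y in (~~ t, k, i).

Lemma ordSS_neq (k : 'I_m) : ordS (ordS k) != k.
Proof.
apply/negP => /eqP/(congr1 val) /=.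
have km := ltn_ord k.
case: (ltngtP k.+1 m) => [lt|gt|eq].
- rewrite (modn_small lt).
  case: (ltngtP k.+2 m) => [lt2|gt2|eq2].
  + by rewrite modn_small // => h; lia.
  + lia.
  + by rewrite eq2 modnn => h; lia.
- lia.
- by rewrite eq modnn modn_small => [h|]; lia.
Qed.

Lemma ordS_pred_neq (k : 'I_m) : ordS k != ord_pred k.
Proof.
apply/negP => /eqP h; have := ordSS_neq k.
by rewrite h ord_predK eqxx.
Qed.

Lemma ordS_eq (b k : 'I_m) : ((b.+1 %% m)%N == k :> nat) = (b == ord_pred k).
Proof.
apply/eqP/eqP => [h|->].
  by rewrite -(ordSK b); congr ord_pred; apply: val_inj.
exact: (congr1 val (ord_predK k)).
Qed.

Lemma ordS_eq' (b k : 'I_m) : ((k.+1 %% m)%N == b :> nat) = (b == ordS k).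
Proof. by rewrite eq_sym -val_eqE. Qed.

Lemma adjE x y : Tadj x y = [|| x == nb1 y, x == nb2 y | x == nb3 y].
Proof.
case: x => [[s a] b]; case: y => [[t i k]] /=.
rewrite !xpair_eqE ordS_eq ordS_eq'.
case: s; case: t => /=; rewrite ?andbF ?orbF ?andbT ?andTb ?andFb //=.
- by rewrite -andb_orr orbC.
- by rewrite andbC eq_sym (eq_sym i).
- by rewrite andbC eq_sym (eq_sym i).
- by rewrite -andb_orr orbC.
Qed.

Lemma adj_sum (K : comNzRingType) (f : T -> K) y :
  \sum_x f x * (Tadj x y : nat)%:R = f (nb1 y) + f (nb2 y) + f (nb3 y).
Proof.
have n12 : nb1 y != nb2 y.
  by case: y => [[t i k]] /=; rewrite !xpair_eqE (negPf (ordS_pred_neq k)) !andbF.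
have n13 : nb1 y != nb3 y by clear n12; case: y => [[t i k]] /=; rewrite !xpair_eqE; case: t.
have n23 : nb2 y != nb3 y by clear n12 n13; case: y => [[t i k]] /=; rewrite !xpair_eqE; case: t.
rewrite -!(sum_delta' f).
rewrite -!big_split /=; apply: eq_bigr => x _; rewrite adjE.
have [->|x1] := eqVneq x (nb1 y).
  by rewrite (negPf n12) (negPf n13) /= !mulr0 !addr0.
have [->|x2] := eqVneq x (nb2 y).
  by rewrite (negPf n23) /= !mulr0 add0r addr0.
have [->|x3] := eqVneq x (nb3 y); first by rewrite /= !mulr0 !add0r.
by rewrite /= !mulr0 !addr0.
Qed.
End Graph.

Lemma nT (K : nzSemiRingType) : ((true : nat)%:R : K) = 1. Proof. by []. Qed.
Lemma nF (K : nzSemiRingType) : ((false : nat)%:R : K) = 0. Proof. by []. Qed.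

Section Sums.
Variables (m : nat) (K : comNzRingType).
Local Notation T := (Tvert m).

Lemma sumT (F : T -> K) :
  \sum_x F x = \sum_(t : bool) \sum_(i : 'I_m) \sum_(k : 'I_m) F (t, i, k).
Proof.
rewrite [RHS]pair_bigA [RHS]pair_bigA /=.
by apply: eq_bigr => [[[t i] k]] _.
Qed.

Lemma sum_jl (F : T -> K) (j l : 'I_m) :
  (forall t j' l', (j' != j) || (l' != l) -> F (t, j', l') = 0) ->
  \sum_x F x = F (true, j, l) + F (false, j, l).
Proof.
move=> h; rewrite sumT big_bool /=.
have H : forall t, \sum_(i : 'I_m) \sum_(k : 'I_m) F (t, i, k) = F (t, j, l).
  move=> t; rewrite (bigD1 j) //= [X in _ + X]big1 ?addr0 => [|i ne]; last first.
    by apply: big1 => k _; apply: h; rewrite ne.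
  rewrite (bigD1 l) //= [X in _ + X]big1 ?addr0 // => k ne.
  by apply: h; rewrite ne orbT.
by rewrite !H.
Qed.

Lemma sum_t (F : T -> K) (t : bool) :
  (forall t' i k, t' != t -> F (t', i, k) = 0) ->
  \sum_x F x = \sum_(i : 'I_m) \sum_(k : 'I_m) F (t, i, k).
Proof.
move=> h; rewrite sumT big_bool /=.
case: t h => h.
  by rewrite [X in _ + X]big1 ?addr0 // => i _; apply: big1 => k _; apply: h.
by rewrite [X in X + _]big1 ?add0r // => i _; apply: big1 => k _; apply: h.
Qed.
End Sums.

Section Eig.
Variables (R : realType) (m : nat).
Hypothesis hm : (3 <= m)%N.
Let hm0 : (0 < m)%N := leq_trans (isT : (0 < 3)%N) hm.
Local Notation T := (Tvert m).
Local Notation K := (R[i]).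
Local Notation rc := (real_complex R).
Local Notation w := (w R m).

Definition a (j : nat) : R := 2 * cos (th R m j).
Definition sq (j l : nat) : R := Num.sqrt ((a l - a j) ^+ 2 + 4).
Definition lam (e : T) : R :=
  let: (s, j, l) := e in (a l + a j + (if s then sq j l else - sq j l)) / 2.
Definition bet (e : T) : R := let: (s, j, l) := e in lam e - a l.
Definition E (t : bool) (j l i k : nat) : K :=
  if t then w ^+ (j * i) * w ^+ (l * k) else w ^+ (j * k) * w ^+ (l * i).
Arguments lam : simpl never.
Arguments bet : simpl never.
Definition Pf (e x : T) : K :=
  let: (s, j, l) := e in let: (t, i, k) := x in
  (if t then 1 else rc (bet e)) * E t j l i k.

Lemma sq_sqr j l : sq j l ^+ 2 = (a l - a j) ^+ 2 + 4.
Proof. by rewrite /sq sqr_sqrtr // addr_ge0 ?sqr_ge0. Qed.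

Lemma sq_gt0 j l : 0 < sq j l.
Proof. by rewrite /sq sqrtr_gt0; apply: ltr_wpDl; rewrite ?sqr_ge0. Qed.

Lemma lam_quad (e : T) : let: (s, j, l) := e in
  lam e ^+ 2 - (a l + a j) * lam e + a l * a j - 1 = 0.
Proof.
case: e => [[s j l]] /=.
have h : forall r : R, r ^+ 2 = (a l - a j) ^+ 2 + 4 ->
  ((a l + a j + r) / 2) ^+ 2 - (a l + a j) * ((a l + a j + r) / 2) + a l * a j - 1 = 0.
  move=> r hr.
  have -> : ((a l + a j + r) / 2) ^+ 2 - (a l + a j) * ((a l + a j + r) / 2) + a l * a j - 1
    = (r ^+ 2 - ((a l - a j) ^+ 2 + 4)) / 4 by field.
  by rewrite hr subrr mul0r.
case: s; apply: h; first exact: sq_sqr.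
by rewrite sqrrN sq_sqr.
Qed.

Lemma eigen_eq (e y : T) :
  \sum_x Pf e x * (Tadj x y : nat)%:R = rc (lam e) * Pf e y.
Proof.
rewrite (adj_sum hm).
have q := lam_quad e.
case: e q => [[s j l]] q; case: y => [[t i k]] /=.
case: t => /=.
- rewrite /E /bet (wS R hm0) (wP R hm0) !mul1r.
  set W1 := w ^+ (j * i); set W2 := w ^+ (l * k).
  transitivity (W1 * W2 * (w ^+ l + w ^+ (l * m.-1) + rc (lam (s, j, l) - a l))).
    ring.
  rewrite (wsum R hm0) -rmorphD.
  have -> : 2 * cos (th R m l) + (lam (s, j, l) - a l) = lam (s, j, l) by rewrite /a; ring.
  ring.
- rewrite /E /bet (wS R hm0) (wP R hm0) !mul1r.
  set W1 := w ^+ (j * k); set W2 := w ^+ (l * i).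
  transitivity (W1 * W2 * (rc (lam (s, j, l) - a l) * (w ^+ j + w ^+ (j * m.-1)) + 1)).
    ring.
  rewrite (wsum R hm0) -rmorphM -(rmorph1 rc) -rmorphD.
  have -> : (lam (s, j, l) - a l) * (2 * cos (th R m j)) + 1 = lam (s, j, l) * (lam (s, j, l) - a l).
    rewrite -/(a j); set L := lam _.
    have -> : L * (L - a l) = L ^+ 2 - (a l + a j) * L + a l * a j - 1 + ((L - a l) * a j + 1) by ring.
    by rewrite q add0r.
  rewrite rmorphM; ring.
Qed.

Definition Ei (t : bool) (j l i k : nat) : K :=
  if t then w^-1 ^+ (j * i) * w^-1 ^+ (l * k) else w^-1 ^+ (j * k) * w^-1 ^+ (l * i).
Definition Fm (e x : T) : K :=
  let: (t, j, l) := e in let: (t', i, k) := x in (t' == t)%:R * E t j l i k.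
Definition Gm (x e : T) : K :=
  let: (t', i, k) := x in let: (t, j, l) := e in
  (t' == t)%:R * (Ei t j l i k / (m%:R ^+ 2)).

Lemma mK0 : (m%:R : K) != 0.
Proof. by rewrite pnatr_eq0 -lt0n hm0. Qed.

Lemma FG e e2 : \sum_x Fm e x * Gm x e2 = (e == e2)%:R.
Proof.
case: e => [[t j l]]; case: e2 => [[t2 j2 l2]].
rewrite (sum_t (t:=t)) => [|t' i k ne]; last by rewrite /Fm /Gm (negPf ne) nF !mul0r.
rewrite /Fm /Gm; under eq_bigr do under eq_bigr do rewrite eqxx nT mul1r.
have [<-|ne] := eqVneq t t2; last first.
  rewrite big1 => [|i _]; last first.
    by apply: big1 => k _; rewrite nF mul0r mulr0.
  by rewrite !xpair_eqE (negPf ne).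
under eq_bigr do under eq_bigr do rewrite nT mul1r.
have H : forall z1 z2 : K, \sum_(i < m) \sum_(k < m) (z1 ^+ i * z2 ^+ k) =
  (\sum_(i < m) z1 ^+ i) * (\sum_(k < m) z2 ^+ k) by move=> z1 z2; rewrite big_distrlr.
have hfin : (\sum_(i < m) (w ^+ j * w^-1 ^+ j2) ^+ i) *
   (\sum_(k < m) (w ^+ l * w^-1 ^+ l2) ^+ k) / m%:R ^+ 2 = ((t, j, l) == (t, j2, l2))%:R.
  rewrite !(geo_sum R hm0) !xpair_eqE eqxx /=.
  case: (j == j2); case: (l == l2); rewrite /= ?mul0n ?mul1n ?mulr0n ?mul0r ?mulr0.
  all: try (by apply: mul0r); try reflexivity.
  by rewrite -expr2 divff // expf_neq0 // mK0.
rewrite -hfin; clear hfin; case: t.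
  rewrite -H mulr_suml; apply: eq_bigr => i _; rewrite mulr_suml; apply: eq_bigr => k _.
  by rewrite mulrA; congr (_ * _); rewrite /E /Ei !exprMn !exprM; ring.
rewrite exchange_big -H mulr_suml; apply: eq_bigr => k _; rewrite mulr_suml; apply: eq_bigr => i _.
by rewrite mulrA; congr (_ * _); rewrite /E /Ei !exprMn !exprM; ring.
Qed.


Definition Bm (e e' : T) : K :=
  let: (s, j, l) := e in let: (t, j', l') := e' in
  (j' == j)%:R * ((l' == l)%:R * (if t then 1 else rc (bet e))).

Definition c2 (t s' : bool) (j l : 'I_m) : R :=
  let bp := bet (true, j, l) in let bm := bet (false, j, l) in
  let d := bm - bp in
  match t, s' with
  | true, true => bm / d | true, false => - bp / d
  | false, true => - 1 / d | false, false => 1 / d end.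

Definition Bi (e' e2 : T) : K :=
  let: (t, j, l) := e' in let: (s', j', l') := e2 in
  (j' == j)%:R * ((l' == l)%:R * rc (c2 t s' j l)).

Lemma d_neq0 (j l : 'I_m) : bet (true, j, l) - bet (false, j, l) != 0.
Proof.
rewrite /bet /lam.
have -> : (a l + a j + sq j l) / 2 - a l - ((a l + a j + - sq j l) / 2 - a l) = sq j l by field.
by rewrite gt_eqF // sq_gt0.
Qed.

Lemma c2_alg (bp bm : R) : bm - bp != 0 ->
  [/\ bm / (bm - bp) + bp * (-1 / (bm - bp)) = 1,
       - bp / (bm - bp) + bp * (1 / (bm - bp)) = 0,
       bm / (bm - bp) + bm * (-1 / (bm - bp)) = 0 &
       - bp / (bm - bp) + bm * (1 / (bm - bp)) = 1].
Proof. by move=> d; split; field. Qed.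

Lemma c2_ok (s s' : bool) (j l : 'I_m) :
  c2 true s' j l + bet (s, j, l) * c2 false s' j l = (s == s')%:R.
Proof.
have d1 : bet (false, j, l) - bet (true, j, l) != 0.
  by rewrite -opprB oppr_eq0 d_neq0.
have [h1 h2 h3 h4] := c2_alg d1.
by case: s; case: s'; rewrite /c2 /= ?nT ?nF.
Qed.

Lemma BF e x : \sum_y Bm e y * Fm y x = Pf e x.
Proof.
case: e => [[s j l]]; case: x => [[t' i k]].
rewrite (sum_jl (j:=j) (l:=l)) => [|t j' l' h]; last first.
  by rewrite /Bm /=; case/orP: h => /negPf ->; rewrite nF; ring.
rewrite /Bm /Fm /Pf !eqxx !nT !mul1r.
case: t' => /=; rewrite ?nT ?nF; ring.
Qed.

Lemma BB e e2 : \sum_y Bm e y * Bi y e2 = (e == e2)%:R.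
Proof.
case: e => [[s j l]]; case: e2 => [[s' j2 l2]].
rewrite (sum_jl (j:=j) (l:=l)) => [|t j' l' h]; last first.
  by rewrite /Bm /=; case/orP: h => /negPf ->; rewrite nF; ring.
rewrite /Bm /Bi !eqxx !nT !mul1r !xpair_eqE.
have [<-|ne] := eqVneq j2 j; last first.
  by rewrite ?andbF ?andFb /= ?nF; ring.
have [<-|ne] := eqVneq l2 l; last first.
  by rewrite ?andbF ?andFb /= ?nF; ring.
rewrite !andbT !nT !mul1r -rmorphM -rmorphD c2_ok.
by rewrite rmorph_nat.
Qed.


Lemma pair_count (j l : 'I_m) :
  addn (lam (true, j, l) == 1) (lam (false, j, l) == 1) =
  (cos (th R m j) + cos (th R m l) == 2 * cos (th R m j) * cos (th R m l)) :> nat.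
Proof.
have hr := sq_sqr j l; have r0 := sq_gt0 j l.
have eT : (lam (true, j, l) == 1) = (sq j l == 2 - (a l + a j)).
  by rewrite /lam /=; apply/eqP/eqP => h; lra.
have eF : (lam (false, j, l) == 1) = (sq j l == (a l + a j) - 2).
  by rewrite /lam /=; apply/eqP/eqP => h; lra.
have ec : (cos (th R m j) + cos (th R m l) == 2 * cos (th R m j) * cos (th R m l))
   = (sq j l ^+ 2 == ((a l + a j) - 2) ^+ 2).
  rewrite hr /a; apply/eqP/eqP => h; nra.
rewrite eT eF ec eqf_sqr opprB.
have [h1|h1] := eqVneq (sq j l) (2 - (a l + a j)).
  have -> : (sq j l == a l + a j - 2) = false.
    apply/negP => /eqP h2; move: r0; rewrite h2 in h1; lra.
  by rewrite orbT.
by rewrite orbF; case: (sq j l == a l + a j - 2).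
Qed.


Definition Ac : 'M[K]_#|T| := mkM (fun x y => (Tadj x y : nat)%:R).
Definition Dm : 'M[K]_#|T| := mkM (fun x y => (x == y)%:R * rc (lam x)).

Lemma PQ1 : mkM Pf *m (mkM Gm *m mkM Bi) = 1%:M.
Proof.
have -> : mkM Pf = mkM Bm *m mkM Fm.
  by rewrite mkM_mul; apply: mkM_ext => x y; rewrite BF.
have FG' : mkM (fun x y => \sum_z Fm x z * Gm z y) = 1%:M.
  by rewrite -mkM1; apply: mkM_ext => x y; exact: FG.
have BB' : mkM (fun x y => \sum_z Bm x z * Bi z y) = 1%:M.
  by rewrite -mkM1; apply: mkM_ext => x y; exact: BB.
rewrite mulmxA -(mulmxA (mkM Bm)) [mkM Fm *m _]mkM_mul FG' mulmx1 mkM_mul BB' //.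
Qed.

Lemma PA : mkM Pf *m Ac = Dm *m mkM Pf.
Proof.
rewrite /Ac /Dm !mkM_mul; apply: mkM_ext => x y; rewrite eigen_eq.
rewrite (eq_bigr (fun z => (z == x)%:R * (rc (lam x) * Pf z y))) ?sum_delta // => z _.
by rewrite eq_sym mulrA.
Qed.

Lemma charAc : char_poly Ac = \prod_x ('X - (rc (lam x))%:P).
Proof. by rewrite (char_poly_sim PQ1 PA) /Dm char_poly_mkM_diag. Qed.

End Eig.

Lemma sumTn m (F : Tvert m -> nat) :
  (\sum_x F x = \sum_(t : bool) \sum_(i : 'I_m) \sum_(k : 'I_m) F (t, i, k))%N.
Proof.
rewrite [RHS]pair_bigA [RHS]pair_bigA /=.
by apply: eq_bigr => [[[t i] k]] _.
Qed.

Theorem corollary6p10 (R : realType) (m : nat) (hm : (3 <= m)%N) :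
  eig_mult (Tadjmx R m) 1 =
  #|[set p : 'I_m * 'I_m |
      cos (2 * pi * (p.1 : nat)%:R / m%:R : R) + cos (2 * pi * (p.2 : nat)%:R / m%:R : R)
      == 2 * cos (2 * pi * (p.1 : nat)%:R / m%:R : R) * cos (2 * pi * (p.2 : nat)%:R / m%:R : R)]|.
Proof.
have Amap : map_mx (real_complex R) (Tadjmx R m) = Ac R m.
  by apply/matrixP => x y; rewrite !mxE rmorph_nat.
have cp : char_poly (Tadjmx R m) = \prod_(x : Tvert m) ('X - (lam R x)%:P).
  apply: (@map_poly_inj _ _ (real_complex R)).
  rewrite map_char_poly Amap (charAc R hm) rmorph_prod; apply: eq_bigr => x _.
  by symmetry; exact: map_polyXsubC.
rewrite /eig_mult cp -(big_map (@lam R m) xpredT (fun y => 'X - y%:P)) mu_prod_XsubC count_map.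
rewrite -sum1_count big_mkcond /=.
transitivity (\sum_(x : Tvert m) (lam R x == 1%R : nat))%N.
  by apply: eq_bigr => x _; rewrite /=; case: (lam R x == 1).
rewrite sumTn big_bool -big_split.
have H2 : forall G : 'I_m * 'I_m -> nat, (\sum_p G p = \sum_j \sum_l G (j, l))%N.
  by move=> G; rewrite pair_bigA; apply: eq_bigr => [[]].
rewrite -sum1_card [RHS]big_mkcond H2.
apply: eq_bigr => j _; rewrite -big_split; apply: eq_bigr => l _.
transitivity (addn (lam R (true, j, l) == 1) (lam R (false, j, l) == 1)); first by [].
rewrite pair_count inE /=.
by case: (_ == _).
Qed.
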